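(* For every finite simple undirected graph $G$, $\dim(\mathrm{TECSP}(G)) = |\mathrm{CP}(G)|$.
   Context: All graphs are finite, simple and undirected. For $\emptyset\subsetneq S\subsetneq V(G)$, $\delta(S)$ denotes the set of edges of $G$ with exactly one endpoint in $S$; such a set is called a cut, and a cut with $k$ edges is a $k$-cut. An edge $e$ is a bridge if $\{e\}=\delta(S)$ for some $S$. A graph is $2$-edge-connected if it is connected and has no bridges (equivalently, any two distinct vertices are joined by two edge-disjoint paths); the empty graph and a single vertex are $2$-edge-connected. For a subgraph $H\subseteq G$, $\chi^H\in\{0,1\}^{E(G)}$ is the incidence vector of $E(H)$. The $2$-edge-connected subgraph polytope is $\mathrm{TECSP}(G)=\mathrm{conv}\{\chi^H : H\subseteq G \text{ is } 2\text{-edge-connected}\}\subseteq\mathbb{R}^{E(G)}$. Two distinct edges $e,f$ are coparallel if $\{e,f\}$ is an inclusion-wise minimal cut of $G$. A coparallel class is an inclusion-wise maximal set $C$ of non-bridge edges such that every two distinct elements of $C$ are coparallel; in particular a non-bridge edge contained in no $2$-cut forms a singleton coparallel class, and bridges lie in no coparallel class. $\mathrm{CP}(G)$ is the set of coparallel classes of $G$. *)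

(* Defs.v *)
From HB Require Import structures.
From mathcomp Require Import all_boot all_order all_algebra.
Set Implicit Arguments. Unset Strict Implicit. Unset Printing Implicit Defensive.
Import Order.TTheory GRing.Theory Num.Theory.
Local Open Scope ring_scope.

(* A finite simple undirected graph G is given by a finite vertex type V and a
   symmetric irreflexive adjacency relation e.  An edge is the 2-element
   vertex set {x,y}. *)

Section Graphs.
Variable V : finType.

Definition edges (e : rel V) : {set {set V}} :=
  [set [set p.1; p.2] | p : V * V & e p.1 p.2].

Definition delta (F : {set {set V}}) (S : {set V}) : {set {set V}} :=
  [set f in F | #|f :&: S| == 1%N].

Definition is_cut (e : rel V) (D : {set {set V}}) : bool :=
  [exists S : {set V}, [&& S != set0, S != setT & D == delta (edges e) S]].

Definition is_bridge (e : rel V) (f : {set V}) : bool :=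
  is_cut e [set f].

Definition is_min_cut (e : rel V) (D : {set {set V}}) : bool :=
  [&& is_cut e D, D != set0 &
      [forall D' : {set {set V}}, ((D' \proper D) && (D' != set0)) ==> ~~ is_cut e D']].

Definition coparallel (e : rel V) (f g : {set V}) : bool :=
  (f != g) && is_min_cut e [set f; g].

Definition copar_set (e : rel V) (C : {set {set V}}) : bool :=
  [&& C != set0, C \subset edges e,
      [forall f in C, ~~ is_bridge e f] &
      [forall f in C, forall g in C, (f != g) ==> coparallel e f g]].

Definition CP (e : rel V) : {set {set {set V}}} :=
  [set C | maxset (copar_set e) C].

Definition is_subgraph (e : rel V) (W : {set V}) (F : {set {set V}}) : bool :=
  (W \subset [set: V]) && (F \subset edges e) && [forall f in F, f \subset W].

Definition connectedH (W : {set V}) (F : {set {set V}}) : Prop :=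
  forall x y, x \in W -> y \in W -> connect (fun a b => [set a; b] \in F) x y.

Definition is_bridgeH (W : {set V}) (F : {set {set V}}) (f : {set V}) : bool :=
  [exists S : {set V},
     [&& S \subset W, S != set0, S != W & delta F S == [set f]]].

Definition two_edge_connected (W : {set V}) (F : {set {set V}}) : Prop :=
  connectedH W F /\ (forall f, f \in F -> ~~ is_bridgeH W F f).

End Graphs.

Section Polytopes.
Variable R : realFieldType.
Variable V : finType.

(* R^{E(G)} is represented inside R^{2-subsets}: coordinates outside E(G) are
   zero for all points considered, which does not affect affine dimension. *)
Local Notation vec := {ffun {set V} -> R^o}.

Definition incidence (F : {set {set V}}) : vec :=
  [ffun f => if f \in F then 1 else 0].

Definition tecs_point (e : rel V) (x : vec) : Prop :=
  exists (W : {set V}) (F : {set {set V}}),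
    [/\ is_subgraph e W F, two_edge_connected W F & x = incidence F].

Definition conv (P : vec -> Prop) (x : vec) : Prop :=
  exists (n : nat) (p : 'I_n -> vec) (lam : 'I_n -> R),
    [/\ forall i, P (p i), forall i, 0 <= lam i, \sum_i lam i = 1
      & x = \sum_i lam i *: p i].

Definition TECSP (e : rel V) : vec -> Prop := conv (tecs_point e).

Definition aff_indep (n : nat) (p : 'I_n -> vec) : Prop :=
  forall lam : 'I_n -> R, \sum_i lam i = 0 -> \sum_i lam i *: p i = 0 ->
    forall i, lam i = 0.

Definition has_dim (X : vec -> Prop) (d : nat) : Prop :=
  (exists p : 'I_d.+1 -> vec, aff_indep p /\ forall i, X (p i)) /\
  (forall (m : nat) (p : 'I_m -> vec), aff_indep p -> (forall i, X (p i)) ->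
     (m <= d.+1)%N).

End Polytopes.

(* Main.v *)
Require Import Defs.
From mathcomp Require Import all_boot all_order all_algebra.
Set Implicit Arguments. Unset Strict Implicit. Unset Printing Implicit Defensive.
Import Order.TTheory GRing.Theory Num.Theory.


Section Sd.
Variable T : finType.
Definition sd (A B : {set T}) := (A :\: B) :|: (B :\: A).
Lemma in_sd (A B : {set T}) x : (x \in sd A B) = (x \in A) (+) (x \in B).
Proof. by rewrite !inE; case: (x \in A); case: (x \in B). Qed.
End Sd.

Section G.
Variable V : finType.
Variable e : rel V.
Hypothesis e_sym : symmetric e.
Hypothesis e_irr : irreflexive e.

Definition two (f : {set V}) := exists a b, a != b /\ f = [set a; b].

Lemma edgesP f : reflect (exists a b, e a b /\ f = [set a; b]) (f \in edges e).
Proof.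
rewrite /edges; apply: (iffP imsetP).
  by case=> [[a b]]; rewrite inE /= => Hab ->; exists a, b.
by case=> a [b [Hab ->]]; exists (a, b); rewrite ?inE.
Qed.

Lemma edge_two f : f \in edges e -> two f.
Proof.
case/edgesP=> a [b [Hab ->]]; exists a, b; split=> //.
by apply: contraTneq Hab => ->; rewrite e_irr.
Qed.

Lemma cross2 (a b : V) S : a != b ->
  (#|[set a; b] :&: S| == 1%N) = (a \in S) (+) (b \in S).
Proof.
move=> ab; have ba : b != a by rewrite eq_sym.
have E : forall X : {set V}, (forall x, (x \in [set a; b] :&: S) = (x \in X)) -> [set a; b] :&: S = X.
  by move=> X H; apply/setP => x; rewrite H.
case ha: (a \in S); case hb: (b \in S).
- rewrite (@E [set a; b]) ?cards2 ?ab // => x; rewrite !inE.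
  have [->|xa] := eqVneq x a; [by rewrite ?eqxx ?ha ?hb ?(negbTE ab) ?(negbTE ba) /= ?orbT ?andbT ?andbF|].
  have [->|xb] := eqVneq x b; [by rewrite ?eqxx ?ha ?hb ?(negbTE ab) ?(negbTE ba) /= ?orbT ?andbT ?andbF|].
  by rewrite ?(negbTE xa) ?(negbTE xb) /= ?andbF.
- rewrite (@E [set a]) ?cards1 // => x; rewrite !inE.
  have [->|xa] := eqVneq x a; [by rewrite ?eqxx ?ha ?hb ?(negbTE ab) ?(negbTE ba) /= ?orbT ?andbT ?andbF|].
  have [->|xb] := eqVneq x b; [by rewrite ?eqxx ?ha ?hb ?(negbTE ab) ?(negbTE ba) /= ?orbT ?andbT ?andbF|].
  by rewrite ?(negbTE xa) ?(negbTE xb) /= ?andbF.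
- rewrite (@E [set b]) ?cards1 // => x; rewrite !inE.
  have [->|xa] := eqVneq x a; [by rewrite ?eqxx ?ha ?hb ?(negbTE ab) ?(negbTE ba) /= ?orbT ?andbT ?andbF|].
  have [->|xb] := eqVneq x b; [by rewrite ?eqxx ?ha ?hb ?(negbTE ab) ?(negbTE ba) /= ?orbT ?andbT ?andbF|].
  by rewrite ?(negbTE xa) ?(negbTE xb) /= ?andbF.
- rewrite (@E set0) ?cards0 // => x; rewrite !inE.
  have [->|xa] := eqVneq x a; [by rewrite ?eqxx ?ha ?hb ?(negbTE ab) ?(negbTE ba) /= ?orbT ?andbT ?andbF|].
  have [->|xb] := eqVneq x b; [by rewrite ?eqxx ?ha ?hb ?(negbTE ab) ?(negbTE ba) /= ?orbT ?andbT ?andbF|].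
  by rewrite ?(negbTE xa) ?(negbTE xb) /= ?andbF.
Qed.

Definition twoE (F : {set {set V}}) := forall f, f \in F -> two f.

Lemma delta_sd F S T : twoE F -> delta F (sd S T) = sd (delta F S) (delta F T).
Proof.
move=> tF; apply/setP => f; rewrite in_sd !inE.
case fF: (f \in F) => //=.
have [a [b [ab ->]]] := tF f fF.
rewrite !cross2 // !in_sd.
by case: (a \in S); case: (a \in T); case: (b \in S); case: (b \in T).
Qed.

Lemma delta0 F : twoE F -> delta F set0 = set0.
Proof.
move=> tF; apply/setP => f; rewrite !inE; case fF: (f \in F) => //=.
by have [a [b [ab ->]]] := tF f fF; rewrite cross2 // !inE.
Qed.

Lemma deltaW F (W : {set V}) : twoE F -> (forall f, f \in F -> f \subset W) -> delta F W = set0.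
Proof.
move=> tF sW; apply/setP => f; rewrite !inE; case fF: (f \in F) => //=.
have := sW f fF; have [a [b [ab ->]]] := tF f fF; rewrite cross2 //.
by rewrite subUset !sub1set => /andP[-> ->].
Qed.

Lemma deltaT F : twoE F -> delta F setT = set0.
Proof. by move=> tF; apply: deltaW => // f _; apply: subsetT. Qed.

Lemma delta_sub (F' F : {set {set V}}) (S : {set V}) : F' \subset F -> delta F' S = delta F S :&: F'.
Proof.
move=> /subsetP sF; apply/setP => f; rewrite /delta !inE.
by rewrite [RHS]andbC; case fF: (f \in F') => //=; rewrite sF.
Qed.

Lemma delta_subset (F : {set {set V}}) (S : {set V}) : delta F S \subset F.
Proof. by apply/subsetP => f; rewrite inE => /andP[]. Qed.

Lemma twoE_edges : twoE (edges e).
Proof. by move=> f; apply: edge_two. Qed.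

Lemma twoE_sub (F F' : {set {set V}}) : twoE F -> F' \subset F -> twoE F'.
Proof. by move=> tF /subsetP s f /s; apply: tF. Qed.

End G.


Section G2.
Variable V : finType.
Variable e : rel V.
Hypothesis e_sym : symmetric e.
Hypothesis e_irr : irreflexive e.
Local Notation E := (edges e).
Implicit Types (X C D : {set {set V}}) (f g h x y : {set V}) (S T : {set V}).

Definition brX (X : {set {set V}}) f := [exists S, delta X S == [set f]].
Definition NX (X : {set {set V}}) := [set f in X | ~~ brX X f].

Lemma tE : twoE E. Proof. exact: twoE_edges. Qed.

Lemma cut_of S : delta E S != set0 -> is_cut e (delta E S).
Proof.
move=> ne; apply/existsP; exists S; rewrite eqxx andbT.
apply/andP; split.
  by apply: contraNneq ne => ->; rewrite delta0 //; apply: tE.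
by apply: contraNneq ne => ->; rewrite deltaT //; apply: tE.
Qed.

Lemma is_cutP D : is_cut e D -> exists S, D = delta E S.
Proof. by case/existsP => S /and3P[_ _ /eqP ->]; exists S. Qed.

Lemma bridgeE f : is_bridge e f = brX E f.
Proof.
apply/idP/idP.
  by case/is_cutP => S eS; apply/existsP; exists S; rewrite eS.
case/existsP => S /eqP eS; rewrite /is_bridge -eS; apply: cut_of.
by rewrite eS; apply/set0Pn; exists f; rewrite inE.
Qed.

Lemma NXP X f : reflect (f \in X /\ forall S, delta X S <> [set f]) (f \in NX X).
Proof.
rewrite inE; apply: (iffP andP) => [[fX nb]|[fX nb]]; split=> //.
  by move=> S eS; move/existsP: nb; apply; exists S; rewrite eS.
by apply/existsP => [[S /eqP]]; apply: nb.
Qed.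

Lemma NX_sub X : NX X \subset X.
Proof. by apply/subsetP => f /NXP[]. Qed.

Lemma copar_intro f g S : f != g -> f \in NX E -> g \in NX E ->
  delta E S = [set f; g] -> coparallel e f g.
Proof.
move=> fg /NXP[fE nf] /NXP[gE ng] eS; rewrite /coparallel fg /=.
have ne : [set f; g] != set0 by apply/set0Pn; exists f; rewrite !inE eqxx.
rewrite /is_min_cut -eS cut_of; last by rewrite eS.
rewrite eS ne /=.
apply/forallP => D; apply/implyP => /andP[pD nD]; apply/negP => /is_cutP [T eT].
have c1 : #|D| = 1%N.
  have := proper_card pD; rewrite cards2 fg /=.
  by move: nD; rewrite -card_gt0; case: #|D| => [|[|]].
have [x eD] := cards1P (introT eqP c1).
have : x \in [set f; g] by move/proper_sub/subsetP: pD; apply; rewrite eD set11.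
rewrite !inE => /orP[]/eqP xe; subst x.
  by apply: (nf T); rewrite -eT eD.
by apply: (ng T); rewrite -eT eD.
Qed.

Lemma copar_elim f g : coparallel e f g -> f != g /\ exists S, delta E S = [set f; g].
Proof.
case/andP => fg /and3P[/is_cutP [S eS] _ _]; split=> //; by exists S.
Qed.

Lemma copar_sym f g : coparallel e f g -> coparallel e g f.
Proof. by rewrite /coparallel setUC eq_sym. Qed.

Lemma copar_NX C f : copar_set e C -> f \in C -> f \in NX E.
Proof.
case/and4P => _ /subsetP sC /forallP nb _ fC; rewrite inE sC //=.
by rewrite -bridgeE; move/implyP: (nb f); apply.
Qed.

Lemma copar_trans f g h : f \in NX E -> h \in NX E -> f != h ->
  coparallel e f g -> coparallel e g h -> coparallel e f h.
Proof.
move=> fN hN fh /copar_elim[fg [S eS]] /copar_elim[gh [T eT]].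
apply: (@copar_intro _ _ (sd S T)) => //.
rewrite delta_sd; last exact: tE.
rewrite eS eT; apply/setP => x; rewrite in_sd !inE.
have [->|xf] := eqVneq x f; first by rewrite (negbTE fg) (negbTE fh).
have [->|xg] := eqVneq x g; first by rewrite ?eqxx ?orbT (negbTE gh) /=.
by case: (x == h).
Qed.

Lemma CP_copar C : C \in CP e -> copar_set e C.
Proof. by rewrite inE => /maxsetp. Qed.

Lemma CP_pair C f g : C \in CP e -> f \in C -> g \in C -> f != g -> coparallel e f g.
Proof.
move/CP_copar => /and4P[_ _ _ /forallP H] fC gC fg.
by move: (H f) => /implyP /(_ fC) /forallP /(_ g) /implyP /(_ gC) /implyP; apply.
Qed.

Lemma class_join C f g : C \in CP e -> g \in C -> f \in NX E -> coparallel e f g -> f \in C.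
Proof.
move=> CC gC fN fg.
have cC := CP_copar CC.
suff : copar_set e (f |: C).
  move=> cfC; move: CC; rewrite inE => /maxsetP[_ mx].
  by rewrite -(mx _ cfC (subsetUr _ _)) setU11.
case/and4P: (cC) => ne sC nb pw.
apply/and4P; split.
- by apply/set0Pn; exists f; rewrite setU11.
- by rewrite subUset sub1set sC andbT; case/NXP: fN.
- apply/forallP => x; apply/implyP; rewrite !inE => /orP[/eqP->|xC].
    by rewrite bridgeE; case/NXP: fN => _ H; apply/existsP => [[S /eqP]]; apply: H.
  by move/forallP: nb => /(_ x) /implyP; apply.
- apply/forallP => x; apply/implyP => xin; apply/forallP => y; apply/implyP => yin.
  apply/implyP => xy.
  move: xin yin; rewrite !inE => /orP[/eqP xf|xC] /orP[/eqP yf|yC].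
  + by rewrite xf yf eqxx in xy.
  + subst x; have [->|yg] := eqVneq y g; first by [].
    apply: (@copar_trans _ g) => //; first exact: (copar_NX cC).
    by apply: (CP_pair CC gC yC); rewrite eq_sym.
  + subst y; apply: copar_sym.
    have [->|xg] := eqVneq x g; first by [].
    apply: (@copar_trans _ g) => //; first exact: (copar_NX cC).
      by rewrite eq_sym.
    by apply: (CP_pair CC gC xC); rewrite eq_sym.
  + exact: (CP_pair CC).
Qed.

Lemma class_unique C1 C2 f : C1 \in CP e -> C2 \in CP e -> f \in C1 -> f \in C2 -> C1 = C2.
Proof.
suff H : forall C1 C2, C1 \in CP e -> C2 \in CP e -> f \in C1 -> f \in C2 -> C2 \subset C1.
  by move=> *; apply/eqP; rewrite eqEsubset !(H C1 C2) ?(H C2 C1).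
move=> {}C1 {}C2 c1 c2 f1 f2; apply/subsetP => y y2.
have [->|yf] := eqVneq y f; first by [].
apply: (class_join c1 f1); first exact: (copar_NX (CP_copar c2) y2).
exact: (CP_pair c2).
Qed.

Lemma class_exists f : f \in NX E -> exists2 C, C \in CP e & f \in C.
Proof.
move=> fN.
have cf : copar_set e [set f].
  case/NXP: (fN) => fE nb.
  apply/and4P; split.
  - by apply/set0Pn; exists f; rewrite set11.
  - by rewrite sub1set.
  - apply/forallP => x; apply/implyP; rewrite inE => /eqP ->.
    by rewrite bridgeE; apply/existsP => [[S /eqP]]; apply: nb.
  - apply/forallP => x; apply/implyP; rewrite inE => /eqP ->.
    apply/forallP => y; apply/implyP; rewrite inE => /eqP ->.
    by rewrite eqxx.
have [C mC sC] := maxset_exists cf.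
by exists C; rewrite ?inE // -sub1set.
Qed.

End G2.


Section G3.
Variable V : finType.
Variable e : rel V.
Hypothesis e_sym : symmetric e.
Hypothesis e_irr : irreflexive e.
Local Notation E := (edges e).
Implicit Types (X C D B F : {set {set V}}) (f g h x y : {set V}) (S T W : {set V}).

Lemma tE' : twoE E. Proof. exact: twoE_edges. Qed.

Lemma bridgeH_of W F f S : F \subset E -> (forall g, g \in F -> g \subset W) ->
  delta E S :&: F = [set f] -> is_bridgeH W F f.
Proof.
move=> sF sW eS.
have tF : twoE F := twoE_sub tE' sF.
have dI : delta F (S :&: W) = [set f].
  rewrite -eS -delta_sub //; apply/setP => g; rewrite /delta !inE.
  case gF: (g \in F) => //=.
  have := sW g gF; have [a [b [ab eg]]] := tF g gF; rewrite eg.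
  rewrite subUset !sub1set => /andP[aW bW].
  by rewrite !cross2 // !inE aW bW !andbT.
apply/existsP; exists (S :&: W); rewrite dI eqxx subsetIr andbT /=.
apply/andP; split.
  by apply/negP => /eqP H; move: dI; rewrite H delta0 // => H2; move: (set11 f); rewrite -H2 inE.
by apply/negP => /eqP H; move: dI; rewrite H deltaW // => H2; move: (set11 f); rewrite -H2 inE.
Qed.

Lemma subgraphP W F : is_subgraph e W F -> F \subset E /\ (forall g, g \in F -> g \subset W).
Proof.
case/andP => /andP[_ sF] /forallP sW; split=> // g gF.
by move/implyP: (sW g); apply.
Qed.

Lemma tec_NX W F f : is_subgraph e W F -> (forall g, g \in F -> ~~ is_bridgeH W F g) ->
  f \in F -> f \in NX E.
Proof.
move=> /subgraphP [sF sW] nb fF.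
have fE : f \in E by move/subsetP: sF; apply.
apply/NXP; split=> // S eS.
move/negP: (nb f fF); apply; apply: (bridgeH_of (S := S)) => //.
by rewrite eS; apply/setIidPl; rewrite sub1set.
Qed.

Lemma tec_class W F C f g : is_subgraph e W F -> (forall g, g \in F -> ~~ is_bridgeH W F g) ->
  C \in CP e -> f \in C -> g \in C -> f \in F -> g \in F.
Proof.
move=> sg nb CC fC gC fF.
have [<-|fg] := eqVneq f g; first by [].
have [_ [S eS]] := copar_elim (CP_pair CC fC gC fg).
apply/negPn/negP => gF.
have [sF sW] := subgraphP sg.
move/negP: (nb f fF); apply; apply: (bridgeH_of (S := S)) => //.
rewrite eS; apply/setP => x; rewrite !inE.
have [->|xf] := eqVneq x f; first by rewrite fF.
have [->|xg] := eqVneq x g; first by rewrite (negbTE gF).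
by [].
Qed.

Lemma peel X f : X \subset E -> forall B S, (forall g, g \in B -> brX X g) -> f \notin B ->
  delta X S = f |: B -> brX X f.
Proof.
move=> sX.
have tX : twoE X := twoE_sub tE' sX.
suff H : forall n B S, #|B| <= n -> (forall g, g \in B -> brX X g) -> f \notin B ->
  delta X S = f |: B -> brX X f by move=> B S; apply: (H #|B|).
elim=> [|n IH] B S.
  rewrite leqn0 cards_eq0 => /eqP -> _ _ eS.
  by apply/existsP; exists S; rewrite eS setU0.
move=> cB bB fB eS.
have [B0|[g gB]] := set_0Vmem B.
  by apply/existsP; exists S; rewrite eS B0 setU0.
have /existsP [T /eqP eT] := bB g gB.
apply: (IH (B :\ g) (sd S T)).
- by rewrite -ltnS (leq_trans _ cB) // (cardsD1 g B) gB.
- by move=> h; rewrite inE => /andP[_ /bB].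
- by rewrite inE negb_and fB orbT.
rewrite delta_sd // eS eT; apply/setP => x; rewrite in_sd !inE.
have [->|xg] := eqVneq x g.
  have gf : (g == f) = false by apply/negbTE; apply: contraNneq fB => <-.
  by rewrite gf gB.
by rewrite /= addbF.
Qed.

Lemma peel2 C f : C \in CP e -> f \in NX E -> f \notin C ->
  forall D S, D \subset C -> delta E S = f |: D -> False.
Proof.
move=> CC fN fC.
suff H : forall n D S, #|D| <= n -> D \subset C -> delta E S = f |: D -> False
  by move=> D S; apply: (H #|D|).
elim=> [|n IH] D S.
  rewrite leqn0 cards_eq0 => /eqP -> _ eS.
  by case/NXP: fN => _ /(_ S); rewrite eS setU0.
move=> cD sD eS.
have [dE|[g gD]] := set_0Vmem D.
  by case/NXP: fN => _ /(_ S); rewrite eS dE setU0.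
have gC : g \in C by move/subsetP: sD; apply.
have fg : f != g by apply: contraNneq fC => ->.
have [hD|[h hD]] := set_0Vmem (D :\ g).
  have eD : D = [set g].
    apply/setP => x; rewrite inE; apply/idP/idP => [xD|/eqP -> //].
    apply/negPn/negP => xg; have : x \in D :\ g by rewrite !inE xg xD.
    by rewrite hD inE.
  move: fC; rewrite (class_join e_irr CC gC fN) //.
  apply: (@copar_intro V e e_irr f g S) => //; first exact: (copar_NX e_irr (CP_copar CC)).
  by rewrite eS eD.
move: hD; rewrite !inE => /andP[hg hD].
have hC : h \in C by move/subsetP: sD; apply.
have gh : g != h by rewrite eq_sym.
have [_ [T eT]] := copar_elim (CP_pair CC gC hC gh).
apply: (IH (D :\: [set g; h]) (sd S T)).
- rewrite -ltnS (leq_trans _ cD) //.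
  rewrite (cardsD1 g D) gD add1n ltnS subset_leq_card //.
  by apply/subsetP => x; rewrite !inE => /andP[/norP[xg _] ->]; rewrite andbT.
- by apply: subset_trans sD; apply: subsetDl.
rewrite delta_sd; last exact: tE'.
rewrite eS eT; apply/setP => x; rewrite in_sd !inE.
have [->|xf] := eqVneq x f.
  have fh : f != h by apply: contraNneq fC => ->.
  by rewrite (negbTE fg) (negbTE fh).
have [->|xg] := eqVneq x g; first by rewrite gD.
have [->|xh] := eqVneq x h; first by rewrite hD.
by rewrite /= addbF.
Qed.

Lemma NX_class C f : C \in CP e -> f \notin C -> (f \in NX E) = (f \in NX (E :\: C)).
Proof.
move=> CC fC; apply/idP/idP.
  move=> fN; have fE : f \in E by case/NXP: fN.
  apply/NXP; split; first by rewrite inE fC.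
  move=> S eS.
  apply: (peel2 CC fN fC (D := delta E S :&: C) (S := S)); first exact: subsetIr.
  apply/setP => g; rewrite in_setU1 in_setI.
  have [->|gf] := eqVneq g f.
    have : f \in delta (E :\: C) S by rewrite eS set11.
    by rewrite (@delta_sub _ _ E) ?subsetDl // in_setI => /andP[->].
  rewrite /=; case gC: (g \in C); rewrite ?andbT ?andbF //.
  apply/negP => gd.
  have : g \in delta (E :\: C) S.
    rewrite (@delta_sub _ _ E) ?subsetDl // in_setI gd in_setD gC /=.
    by move/subsetP: (delta_subset E S); apply.
  by rewrite eS inE (negbTE gf).
move/NXP => [] /setDP [fE _] nb; apply/NXP; split=> // S eS.
apply: (nb S); rewrite (@delta_sub _ _ E) ?subsetDl // eS.
by apply/setP => g; rewrite !inE; case: eqP => // ->; rewrite fC fE.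
Qed.

End G3.


Section G4.
Variable V : finType.
Variable e : rel V.
Hypothesis e_sym : symmetric e.
Hypothesis e_irr : irreflexive e.
Local Notation E := (edges e).
Implicit Types (C D B F : {set {set V}}) (f g h : {set V}) (S T W K : {set V}).
Variable X : {set {set V}}.
Hypothesis sX : X \subset E.

Definition rX (a b : V) := [set a; b] \in NX X.
Lemma rX_sym : symmetric rX.
Proof. by move=> a b; rewrite /rX setUC. Qed.

Definition compo (x : V) := [set y | connect rX x y].
Definition FK K := [set g in NX X | g \subset K].
Definition Comps := [set compo x | x : V].

Lemma tX : twoE X. Proof. exact: (twoE_sub (twoE_edges e_irr) sX). Qed.

Lemma NX_two f : f \in NX X -> exists a b, a != b /\ f = [set a; b].
Proof. by move=> fN; apply: tX; move/subsetP: (NX_sub X); apply. Qed.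

Lemma comp_closed x a b : a \in compo x -> rX a b -> b \in compo x.
Proof. by rewrite !inE => xa ab; apply: connect_trans xa (connect1 ab). Qed.

Lemma comp_eq x a : a \in compo x -> compo a = compo x.
Proof.
rewrite inE => xa; apply/setP => y; rewrite !inE; apply/idP/idP => H.
  exact: connect_trans xa H.
by rewrite (sym_connect_sym rX_sym) in xa; apply: connect_trans xa H.
Qed.

Lemma comp_self x : x \in compo x.
Proof. by rewrite inE connect0. Qed.

Lemma comp_tec x : is_subgraph e (compo x) (FK (compo x)) /\
  two_edge_connected (compo x) (FK (compo x)).
Proof.
set K := compo x.
have sFK : FK K \subset X by apply/subsetP => g; rewrite inE => /andP[/NXP[]].
have sub : is_subgraph e K (FK K).
  rewrite /is_subgraph subsetT (subset_trans sFK sX) /=.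
  by apply/forallP => g; apply/implyP; rewrite inE => /andP[].
split=> //; split.
- pose r' := fun a b => [set a; b] \in FK K.
  have r'sym : symmetric r' by move=> a b; rewrite /r' setUC.
  have pth : forall p z, z \in K -> path rX z p -> path r' z p.
    elim=> [//|w p IH] z zK /= /andP[rzw pw].
    have wK : w \in K := comp_closed zK rzw.
    rewrite IH // andbT /r' inE; apply/andP; split; first exact: rzw.
    by rewrite subUset !sub1set zK wK.
  have cx : forall y, y \in K -> connect r' x y.
    move=> y; rewrite inE => /connectP [p pp ->].
    by apply/connectP; exists p => //; apply: pth pp; apply: comp_self.
  move=> y z yK zK.
  apply: (@connect_trans _ _ x); last exact: cx.
  by rewrite (sym_connect_sym r'sym); apply: cx.
- move=> f fF; apply/negP => /existsP [S /and4P [sSK nS0 nSK /eqP eS]].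
  have fN : f \in NX X by move: fF; rewrite inE => /andP[].
  case/NXP: (fN) => fX nb.
  have fd : f \in delta X S.
    have : f \in delta (FK K) S by rewrite eS set11.
    by rewrite (delta_sub _ sFK) in_setI => /andP[].
  have bB : forall g, g \in delta X S :\ f -> brX X g.
    move=> g; rewrite in_setD1 => /andP[gf gd].
    case: (boolP (brX X g)) => // ngb.
    have gX : g \in X by move/subsetP: (delta_subset X S); apply.
    have gN : g \in NX X by rewrite inE gX ngb.
    have [a [b [ab eg]]] := NX_two gN.
    have gK : g \subset K.
      move: gd; rewrite /delta inE gX /= eg cross2 //.
      have rab : rX a b by rewrite /rX -eg.
      have rba : rX b a by rewrite rX_sym.
      move/subsetP: sSK => sSK.
      case aS: (a \in S); case bS: (b \in S) => //= _; rewrite subUset !sub1set.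
        by rewrite (sSK a aS) (comp_closed (sSK a aS) rab).
      by rewrite (sSK b bS) (comp_closed (sSK b bS) rba).
    have : g \in delta (FK K) S by rewrite (delta_sub _ sFK) in_setI gd inE gN gK.
    by rewrite eS inE (negbTE gf).
  have := @peel _ _ e_irr X f sX (delta X S :\ f) S bB.
  rewrite setD11 setD1K // => /(_ isT erefl) /existsP [T /eqP eT].
  exact: (nb T eT).
Qed.

Lemma comp_cover f : f \in NX X -> exists a, f \subset compo a.
Proof.
move=> fN; have [a [b [ab eg]]] := NX_two fN.
exists a; rewrite eg subUset !sub1set comp_self /=.
by apply: (comp_closed (comp_self a)); rewrite /rX -eg.
Qed.

Lemma comp_uniq K1 K2 f : K1 \in Comps -> K2 \in Comps -> f \in NX X ->
  f \subset K1 -> f \subset K2 -> K1 = K2.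
Proof.
move=> /imsetP [x _ ->] /imsetP [y _ ->] fN s1 s2.
have [a [b [ab eg]]] := NX_two fN.
have a1 : a \in compo x by move/subsetP: s1; apply; rewrite eg set21.
have a2 : a \in compo y by move/subsetP: s2; apply; rewrite eg set21.
by rewrite -(comp_eq a1) -(comp_eq a2).
Qed.
End G4.

Section G5wrap.
Local Open Scope ring_scope.


Lemma free_extract (K : fieldType) (vT : vectType K) (S : seq vT) :
  exists T, [/\ free T, {subset T <= S} & (<<T>> = <<S>>)%VS].
Proof.
elim: S => [|v S [T [fT sT eT]]]; first by exists [::]; split=> //; apply: nil_free.
case vS: (v \in <<S>>%VS).
  exists T; split=> //; first by move=> x /sT xS; rewrite inE xS orbT.
  by rewrite span_cons eT; apply/esym/addv_idPr; rewrite -memvE.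
exists (v :: T); split.
- by rewrite free_cons eT vS.
- by move=> x; rewrite !inE => /orP[->//|/sT ->]; rewrite orbT.
- by rewrite !span_cons eT.
Qed.

Section G5.
Variable R : realFieldType.
Variable V : finType.
Variable e : rel V.
Hypothesis e_sym : symmetric e.
Hypothesis e_irr : irreflexive e.
Local Notation E := (edges e).
Local Notation vec := {ffun {set V} -> R^o}.
Implicit Types (X C D B F : {set {set V}}) (f g h : {set V}) (S T W K : {set V}).

Definition tecb W F :=
  [forall x in W, forall y in W, connect (fun a b => [set a; b] \in F) x y] &&
  [forall f in F, ~~ is_bridgeH W F f].

Lemma tecbP W F : reflect (two_edge_connected W F) (tecb W F).
Proof.
apply: (iffP andP) => [[/forallP c /forallP b]|[c b]]; split.
- move=> x y xW yW; move: (c x); rewrite xW /= => /forallP /(_ y).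
  by rewrite yW.
- by move=> f fF; move: (b f); rewrite fF.
- by apply/forallP => x; apply/implyP => xW; apply/forallP => y; apply/implyP => yW; apply: c.
- by apply/forallP => f; apply/implyP; apply: b.
Qed.

Definition tecsets := [set F | [exists W, is_subgraph e W F && tecb W F]].
Definition Spts : seq vec := [seq incidence R F | F <- enum tecsets].

Lemma Spts_tecs (x : vec) : x \in Spts -> tecs_point e x.
Proof.
case/mapP => F; rewrite mem_enum inE => /existsP [W /andP [sg /tecbP tc]] ->.
by exists W, F.
Qed.

Lemma tecs_TECSP (x : vec) : tecs_point e x -> TECSP e x.
Proof.
move=> tx; exists 1%N, (fun _ => x), (fun _ => 1); split.
- by [].
- by move=> i; rewrite ler01.
- by rewrite big_ord1.
- by rewrite big_ord1 scale1r.
Qed.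

Lemma inc_NX X : X \subset E -> incidence R (NX X) \in <<Spts>>%VS.
Proof.
move=> sX.
have -> : incidence R (NX X) = \sum_(K in Comps X) incidence R (FK X K).
  apply/ffunP => f; rewrite sum_ffunE ffunE.
  case fN: (f \in NX X).
    have [x sx] := comp_cover e_irr sX fN.
    have cx : compo X x \in Comps X by apply: imset_f.
    rewrite (bigD1 (compo X x)) //= ffunE inE fN sx /= big1 ?addr0 //.
    move=> K /andP [KC Kx]; rewrite ffunE inE fN /=.
    case: ifP => // sK; move: Kx; rewrite (comp_uniq e_irr sX KC cx fN sK sx).
    by rewrite eqxx.
  by rewrite big1 // => K _; rewrite ffunE inE fN.
apply: memv_suml => K /imsetP [x _ ->]; apply: memv_span.
apply/mapP; exists (FK X (compo X x)) => //.
rewrite mem_enum inE; apply/existsP; exists (compo X x).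
have [sg tc] := comp_tec e_irr sX x.
by rewrite sg; apply/tecbP.
Qed.

Lemma inc_class C : C \in CP e -> incidence R C \in <<Spts>>%VS.
Proof.
move=> CC.
have -> : incidence R C = incidence R (NX E) - incidence R (NX (E :\: C)).
  apply/ffunP => f; rewrite !ffunE.
  case fC: (f \in C).
    rewrite (copar_NX e_irr (CP_copar CC) fC).
    have : f \notin NX (E :\: C).
      by apply/negP => /(subsetP (NX_sub _)); rewrite inE fC.
    by move/negbTE ->; rewrite subr0.
  by rewrite (NX_class e_irr CC (negbT fC)) subrr.
by apply: memvB; apply: inc_NX => //; apply: subsetDl.
Qed.

Definition rep C : {set V} := odflt set0 [pick f in C].

Lemma rep_in C : C \in CP e -> rep C \in C.
Proof.
move=> /CP_copar /and4P [ne _ _ _]; rewrite /rep.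
case: pickP => [f //|n0]; case/set0Pn: ne => x xC.
by move: (n0 x); rewrite xC.
Qed.

Local Notation cls := (enum (CP e)).

Lemma cls_in j : (j < #|CP e|)%N -> nth set0 cls j \in CP e.
Proof. by move=> jk; rewrite -mem_enum mem_nth // -cardE. Qed.

Lemma cls_free : free [seq incidence R C | C <- cls].
Proof.
apply/freeP => kk H i.
have Yj : forall j : 'I_#|CP e|, [seq incidence R C | C <- cls]`_j = incidence R (nth set0 cls j).
  by move=> j; rewrite (nth_map set0) // -cardE.
have := congr1 (fun x : vec => x (rep (nth set0 cls i))) H.
rewrite sum_ffunE ffunE (bigD1 i) //= big1.
  rewrite ffunE Yj !ffunE rep_in ?cls_in // addr0 => /eqP.
  by rewrite scaler_eq0 oner_eq0 orbF => /eqP.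
move=> j ji; rewrite ffunE Yj !ffunE.
case: ifP; last by rewrite scaler0.
move=> rj.
have := class_unique e_irr (cls_in (ltn_ord i)) (cls_in (ltn_ord j)) (rep_in (cls_in (ltn_ord i))) rj.
move/eqP; rewrite nth_uniq ?enum_uniq -?cardE // => /eqP/val_inj ij.
by move: ji; rewrite ij eqxx.
Qed.

Lemma lower : exists p : 'I_#|CP e|.+1 -> vec, aff_indep p /\ forall i, TECSP e (p i).
Proof.
set k := #|CP e|.
set Y := [seq incidence R C | C <- cls].
have fY : free Y := cls_free.
have YS : (<<Y>> <= <<Spts>>)%VS.
  by apply/span_subvP => y /mapP [C]; rewrite mem_enum => CC ->; apply: inc_class.
have [T [fT sT eT]] := free_extract Spts.
have kT : (k <= size T)%N.
  move: fY; rewrite /free => /eqP dY.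
  have := dimvS YS; rewrite -eT; move: fT; rewrite /free => /eqP ->.
  by rewrite dY size_map -cardE.
set T' := take k T.
have fT' : free T' by move: fT; rewrite -(cat_take_drop k T) => /catl_free.
have sT' : size T' == k by rewrite size_takel.
pose tt := Tuple sT'.
exists (fun i => if unlift ord0 i is Some j then tt`_j else 0).
split.
- move=> lam H0 H1.
  rewrite big_ord_recl in H0; rewrite big_ord_recl unlift_none scaler0 add0r in H1.
  have H1' : \sum_(i < k) lam (lift ord0 i) *: tt`_i = 0.
    by rewrite -[RHS]H1; apply: eq_bigr => i _; rewrite liftK.
  have /freeP lz : free tt by [].
  have l0 : lam ord0 = 0.
    by rewrite -H0 big1 ?addr0 // => i _; apply: (lz _ H1').
  move=> i; case: (unliftP ord0 i) => [j ->|->]; [exact: (lz _ H1') | exact: l0].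
- move=> i; case: unlift => [j|].
    apply: tecs_TECSP; apply: Spts_tecs; apply: sT.
    rewrite -(cat_take_drop k T) mem_cat; apply/orP; left; apply: mem_nth.
    by rewrite (eqP sT').
  apply: tecs_TECSP; exists set0, set0; split.
  + by rewrite /is_subgraph !subsetT sub0set /=; apply/forallP => f; rewrite inE.
  + by split; [move=> x y; rewrite inE | move=> f; rewrite inE].
  + by apply/ffunP => f; rewrite !ffunE inE.
Qed.

Definition inL (x : vec) := (forall f, f \notin NX E -> x f = 0) /\
  (forall C f g, C \in CP e -> f \in C -> g \in C -> x f = x g).

Lemma tecs_inL (x : vec) : tecs_point e x -> inL x.
Proof.
case=> W [F [sg [_ nb] ->]]; split.
- move=> f fN; rewrite ffunE; case: ifP => // fF.
  by move: fN; rewrite (tec_NX e_irr sg nb fF).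
- move=> C f g CC fC gC; rewrite !ffunE.
  case fF: (f \in F); case gF: (g \in F) => //.
    by move: (tec_class e_irr sg nb CC fC gC fF); rewrite gF.
  by move: (tec_class e_irr sg nb CC gC fC gF); rewrite fF.
Qed.

Lemma TECSP_inL (x : vec) : TECSP e x -> inL x.
Proof.
case=> n [p [lam [Pp _ _ ->]]]; split.
- move=> f fN; rewrite sum_ffunE big1 // => i _; rewrite ffunE.
  by case: (tecs_inL (Pp i)) => H _; rewrite H // scaler0.
- move=> C f g CC fC gC; rewrite !sum_ffunE; apply: eq_bigr => i _; rewrite !ffunE.
  by case: (tecs_inL (Pp i)) => _ H; rewrite (H C f g).
Qed.

Lemma upper m (p : 'I_m -> vec) : aff_indep p -> (forall i, TECSP e (p i)) -> (m <= #|CP e|.+1)%N.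
Proof.
move=> Hp Hp2.
set k := #|CP e|.
pose Tm (x : vec) : 'rV[R]_k.+1 :=
  \row_(j < k.+1) (if unlift ord0 j is Some i then x (rep (nth set0 cls i)) else 1).
pose Xt := [tuple Tm (p i) | i < m].
have fX : free Xt.
  apply/freeP => kk H.
  have Hent : forall j, \sum_(i < m) kk i * Tm (p i) 0 j = 0.
    move=> j; have := congr1 (fun M : 'rV_k.+1 => M 0 j) H; rewrite summxE [X in _ = X]mxE => HH.
    by rewrite -[RHS]HH; apply: eq_bigr => i _; rewrite [RHS]mxE nth_mktuple.
  apply: Hp.
  + by rewrite -[RHS](Hent ord0); apply: eq_bigr => i _; rewrite mxE unlift_none mulr1.
  + apply/ffunP => f; rewrite sum_ffunE ffunE.
    case fN: (f \in NX E).
      have [C CC fC] := class_exists e_irr fN.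
      have iC : (index C cls < k)%N by rewrite /k cardE index_mem mem_enum.
      have nC : nth set0 cls (index C cls) = C by rewrite nth_index ?mem_enum.
      rewrite -[RHS](Hent (lift ord0 (Ordinal iC))).
      apply: eq_bigr => i _; rewrite !ffunE mxE liftK /= nC.
      by case: (TECSP_inL (Hp2 i)) => _ HL; rewrite (HL C f (rep C)) // rep_in.
    rewrite big1 // => i _; rewrite ffunE.
    by case: (TECSP_inL (Hp2 i)) => HL _; rewrite HL ?fN // scaler0.
have := dimvS (subvf <<Xt>>%VS); rewrite dimvf.
move: fX; rewrite /free => /eqP ->.
by rewrite size_tuple (dim_matrix R 1 k.+1) mul1r.
Qed.

End G5.

End G5wrap.


Theorem mainTheorem1 (R : realFieldType) (V : finType) (e : rel V)
  (e_sym : symmetric e) (e_irr : irreflexive e) :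
  has_dim (@TECSP R V e) #|CP e|.
Proof.
split; first exact: (lower R e_irr).
by move=> m p; apply: (upper e_irr).
Qed.
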